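(* Let $\mathbb{F}$ be a field and $f\in\mathbb{F}(X)$ of degree $d\ge1$. Write $f^{(k)}=g_k/h_k$ in lowest terms, and let $e,\epsilon,\mu,\nu$ be the smallest positive integers $k$ such that, respectively, $g_k(0)=0$, $h_k(0)=0$, $\deg g_k<\deg h_k$, $\deg g_k>\deg h_k$ (each $\infty$ if no such $k$ exists). If $\min\{\mu,\nu\}<\infty$ set $\delta=|\deg g_{\min\{\mu,\nu\}}-\deg h_{\min\{\mu,\nu\}}|$. Let $S_k$ and $T_k$ denote the multiplicity of $0$ as a root of $g_k$ and of $h_k$ respectively (the degree of the lowest-order term). Then: (i) If $\nu<\mu$, then for every integer $i\ge1$, $\deg g_{i\nu}=d^{i\nu}$ and $\deg h_{i\nu}=d^{i\nu}-\delta^i$; and $\deg g_k=\deg h_k=d^k$ whenever $k\not\equiv0\pmod\nu$. (ii) If $\mu<\nu$ and $\epsilon=e=\infty$, then $\deg g_k=\deg h_k=d^k$ for all $k\ge1$ with $k\ne\mu$. (iii) If $\mu<\nu$ and $e<\epsilon$, write $S=S_e$. Then for $k=ie+\mu$ with $i\ge0$ an integer, $\deg g_k=d^k-\delta S^i$ and $\deg h_k=d^k$; for all other $k\ge1$, $\deg g_k=\deg h_k=d^k$. (iv) If $\mu<\nu$ and $\epsilon<\infty$ (so that $e=\epsilon+\mu$), write $T=T_\epsilon$. Then for every $k\ge1$, $\deg g_{\mu+k}=d^{\mu+k}-\delta S_k$ and $\deg h_{\mu+k}=d^{\mu+k}-\delta T_k$. Moreover, for $k=ie$ with $i\ge1$,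 $S_k=\delta^iT^i$ and $T_k=0$; for $k=ie+\epsilon$ with $i\ge0$, $T_k=\delta^iT^{i+1}$ and $S_k=0$; and for all other $k\ge1$, $S_k=T_k=0$.
   Context: Rational functions are in lowest terms with $\deg(g/h)=\max\{\deg g,\deg h\}$; iterates $f^{(k)}$ are $k$-fold compositions of $f$. *)

(* Defs.v *)
From HB Require Import structures.
From mathcomp Require Import all_boot all_order all_algebra.
Set Implicit Arguments. Unset Strict Implicit. Unset Printing Implicit Defensive.
Import Order.TTheory GRing.Theory Num.Theory.
Local Open Scope ring_scope.

(* degree of a polynomial (the zero polynomial gets degree 0; irrelevant here) *)
Definition pdeg (F : fieldType) (p : {poly F}) : nat := (size p).-1.

Definition rat_comp (F : fieldType) (g h : {poly F})
    (r : {fraction {poly F}}) : {fraction {poly F}} :=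
  (map_poly (fun c : F => tofrac c%:P) g : {poly {fraction {poly F}}}).[r] /
  (map_poly (fun c : F => tofrac c%:P) h : {poly {fraction {poly F}}}).[r].

Definition rat_iter (F : fieldType) (g h : {poly F}) (k : nat)
    : {fraction {poly F}} :=
  iter k (rat_comp g h) (tofrac 'X).

(* m is the smallest positive integer satisfying P, with None = infinity *)
Definition is_first (P : nat -> bool) (m : option nat) : Prop :=
  match m with
  | Some n => (0 < n)%N /\ P n /\ (forall k, (0 < k)%N -> (k < n)%N -> ~~ P k)
  | None => forall k, (0 < k)%N -> ~~ P k
  end.

Definition olt (a b : option nat) : Prop :=
  match a, b with
  | Some x, Some y => (x < y)%N
  | Some _, None => True
  | None, _ => False
  end.

Definition absdiff (a b : nat) : nat := ((a - b) + (b - a))%N.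

(* Main.v *)
Require Import Defs.
From HB Require Import structures.
From mathcomp Require Import all_boot all_order all_algebra.
From mathcomp Require Import ring zify.
Import Order.TTheory GRing.Theory Num.Theory.
Set Implicit Arguments. Unset Strict Implicit. Unset Printing Implicit Defensive.
Local Open Scope ring_scope.

Section Hom.
Variable F : fieldType.
Implicit Types p q G H g h N D A B : {poly F}.

Definition hom (m : nat) (p G H : {poly F}) : {poly F} :=
  \sum_(i < m.+1) p`_i *: (G ^+ i * H ^+ (m - i)).

Definition homG (R : comNzRingType) (phi : F -> R) (m : nat) p (x y : R) : R :=
  \sum_(i < m.+1) phi p`_i * (x ^+ i * y ^+ (m - i)).

Lemma homG_ev (R : fieldType) (phi : {rmorphism F -> R}) m p (x y : R) :
  y != 0 -> (size p <= m.+1)%N ->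
  homG phi m p x y = y ^+ m * (map_poly phi p).[x / y].
Proof.
move=> y0 sp.
rewrite (horner_coef_wide _ (n:=m.+1)); last by rewrite size_map_poly.
rewrite mulr_sumr /homG; apply: eq_bigr => i _.
rewrite coef_map /=.
have lei : (i <= m)%N by rewrite -ltnS.
have -> : y ^+ m = y ^+ (m - i) * y ^+ i by rewrite -exprD subnK.
rewrite exprMn exprVn.
have yi : y ^+ i != 0 by rewrite expf_neq0.
field; exact: yi.
Qed.

Lemma homG_scale (R : comNzRingType) (phi : F -> R) m p (x y z : R) :
  homG phi m p (x * z) (y * z) = z ^+ m * homG phi m p x y.
Proof.
rewrite /homG mulr_sumr; apply: eq_bigr => i _.
have lei : (i <= m)%N by rewrite -ltnS.
have -> : z ^+ m = z ^+ i * z ^+ (m - i) by rewrite -exprD subnKC.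
rewrite !exprMn; ring.
Qed.

Lemma homG_C (R : comNzRingType) (phi : {rmorphism F -> R}) m c (x y : R) :
  homG phi m c%:P x y = phi c * y ^+ m.
Proof.
rewrite /homG big_ord_recl big1 ?addr0.
  by rewrite coefC /= expr0 mul1r subn0.
by move=> i _; rewrite coefC /= rmorph0 mul0r.
Qed.

Lemma hom_C m c G H : hom m c%:P G H = c *: H ^+ m.
Proof.
rewrite /hom big_ord_recl big1 ?addr0.
  by rewrite coefC /= expr0 mul1r subn0.
by move=> i _; rewrite coefC /= scale0r.
Qed.

Lemma homZ m c p G H : hom m (c *: p) G H = c *: hom m p G H.
Proof.
rewrite /hom scaler_sumr; apply: eq_bigr => i _; by rewrite coefZ scalerA.
Qed.

Lemma hom_scale m p c G H : hom m p (c *: G) (c *: H) = c ^+ m *: hom m p G H.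
Proof.
rewrite /hom scaler_sumr; apply: eq_bigr => i _.
have lei : (i <= m)%N by rewrite -ltnS.
rewrite !exprZn -scalerAl -scalerAr !scalerA.
by rewrite -mulrA -exprD (subnKC lei) mulrC.
Qed.

Definition cK : {rmorphism F -> {fraction {poly F}}} := (@tofrac _ \o polyC).

Lemma tofrac_hom m p G H :
  tofrac (hom m p G H) = homG cK m p (tofrac G) (tofrac H).
Proof.
rewrite /hom rmorph_sum; apply: eq_bigr => i _.
by rewrite -mul_polyC !rmorphM !rmorphXn.
Qed.

Definition ev (r : {fraction {poly F}}) p := (map_poly cK p).[r].

Lemma evM r p q : ev r (p * q) = ev r p * ev r q.
Proof. by rewrite /ev rmorphM hornerM. Qed.
Lemma evD r p q : ev r (p + q) = ev r p + ev r q.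
Proof. by rewrite /ev rmorphD hornerD. Qed.
Lemma evX r p n : ev r (p ^+ n) = ev r p ^+ n.
Proof. by rewrite /ev rmorphXn horner_exp. Qed.
Lemma evZ r c p : ev r (c *: p) = cK c * ev r p.
Proof. by rewrite /ev map_polyZ hornerZ. Qed.
Lemma evC r c : ev r c%:P = cK c.
Proof. by rewrite /ev map_polyC hornerC. Qed.
Lemma ev_sum r n (P : 'I_n -> {poly F}) : ev r (\sum_i P i) = \sum_i ev r (P i).
Proof. by rewrite /ev rmorph_sum horner_sum. Qed.

Lemma ev_hom r m p G H : ev r (hom m p G H) = homG cK m p (ev r G) (ev r H).
Proof.
rewrite /hom ev_sum; apply: eq_bigr => i _.
by rewrite evZ evM !evX.
Qed.

Lemma ev_tofrac p : ev (tofrac 'X) p = tofrac p.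
Proof.
have pe := poly_def (size p) (nth 0 p); rewrite coefK in pe.
rewrite /ev horner_coef [in RHS]pe rmorph_sum /=.
rewrite size_map_poly; apply: eq_bigr => i _.
by rewrite coef_map -mul_polyC rmorphM rmorphXn.
Qed.


Lemma hom_size_le m p G H M :
  (size G <= M.+1)%N -> (size H <= M.+1)%N -> (size (hom m p G H) <= (m * M).+1)%N.
Proof.
move=> sG sH; rewrite /hom.
apply: (big_ind (fun q => size q <= (m * M).+1)%N) => //.
- by rewrite size_poly0.
- move=> q1 q2 h1 h2; apply: leq_trans (size_polyD _ _) _; by rewrite geq_max h1 h2.
move=> i _; apply: leq_trans (size_scale_leq _ _) _.
apply: leq_trans (size_polyMleq _ _) _.
have lei : (i <= m)%N by rewrite -ltnS.
have e1 := size_poly_exp_leq G i; have e2 := size_poly_exp_leq H (m - i).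
have hG : ((size G).-1 <= M)%N by move: sG; lia.
have hH : ((size H).-1 <= M)%N by move: sH; lia.
have : ((size G).-1 * i + (size H).-1 * (m - i) <= m * M)%N.
  have -> : (m * M = M * i + M * (m - i))%N by rewrite -mulnDr subnKC // mulnC.
  by apply: leq_add; apply: leq_mul.
move: e1 e2; set a := size (G ^+ i); set b := size (H ^+ (m - i)); lia.
Qed.

Lemma coef_top_mul p q a b : (size p <= a.+1)%N -> (size q <= b.+1)%N ->
  (p * q)`_(a + b) = p`_a * q`_b.
Proof.
move=> sp sq; rewrite coefM.
have ha : (a < (a + b).+1)%N by rewrite ltnS leq_addr.
rewrite (bigD1 (Ordinal ha)) //= addKn big1 ?addr0 // => j /eqP jne.
have [ja|ja] := ltnP j a.
  rewrite [q`__]nth_default ?mulr0 //; apply: leq_trans sq _.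
  have := ltn_ord j; lia.
rewrite nth_default ?mul0r //; apply: leq_trans sp _.
have : (nat_of_ord j != a) by apply/eqP => h; apply: jne; apply: val_inj.
lia.
Qed.

Lemma coef_top_exp p a n : (size p <= a.+1)%N -> (p ^+ n)`_(a * n) = p`_a ^+ n.
Proof.
move=> sp; elim: n => [|n IH]; first by rewrite muln0 !expr0 coefC.
rewrite exprS mulnS coef_top_mul // ?IH ?exprS //.
apply: leq_trans (size_poly_exp_leq _ _) _; rewrite ltnS leq_mul //.
by move: sp; lia.
Qed.

Definition homF (m : nat) p (x y : F) : F :=
  \sum_(i < m.+1) p`_i * (x ^+ i * y ^+ (m - i)).

Lemma hom_top m p G H M :
  (size G <= M.+1)%N -> (size H <= M.+1)%N ->
  (hom m p G H)`_(m * M) = homF m p G`_M H`_M.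
Proof.
move=> sG sH; rewrite /hom coef_sum; apply: eq_bigr => i _.
have lei : (i <= m)%N by rewrite -ltnS.
have -> : (m * M = M * i + M * (m - i))%N by rewrite -mulnDr subnKC // mulnC.
rewrite coefZ coef_top_mul ?coef_top_exp //;
  apply: leq_trans (size_poly_exp_leq _ _) _; rewrite ltnS leq_mul //.
  by move: sG; lia.
by move: sH; lia.
Qed.

Lemma homF_ev m p (x y : F) : y != 0 -> (size p <= m.+1)%N ->
  homF m p x y = y ^+ m * p.[x / y].
Proof.
move=> y0 sp; have := homG_ev (idfun : {rmorphism F -> F}) x y0 sp.
by rewrite map_poly_id.
Qed.

Lemma homF_x0 m p (x : F) : homF m p x 0 = p`_m * x ^+ m.
Proof.
rewrite /homF big_ord_recr /= big1 ?add0r ?subnn ?expr0 ?mulr1 //.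
move=> i _; rewrite expr0n.
have : (m - i != 0)%N by have := ltn_ord i; lia.
by move/negPf => ->; rewrite mulr0 mulr0.
Qed.

Lemma size_eq_coef p m : size p = m.+1 -> p`_m != 0.
Proof. by move=> e; have := lead_coef_eq0 p; rewrite lead_coefE e /= => ->; rewrite -size_poly_eq0 e. Qed.

Lemma Deg_top g h m G H M :
  coprimep g h -> (size g <= m.+1)%N -> (size h <= m.+1)%N ->
  (size g == m.+1) || (size h == m.+1) ->
  (size G <= M.+1)%N -> (size H <= M.+1)%N -> (G`_M != 0) || (H`_M != 0) ->
  ((hom m g G H)`_(m * M) != 0) || ((hom m h G H)`_(m * M) != 0).
Proof.
move=> cgh sg sh smax sG sH nz; rewrite !hom_top //.
have [b0|b0] := eqVneq H`_M 0.
  rewrite b0 !homF_x0; move: nz; rewrite b0 eqxx orbF => a0.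
  rewrite !mulf_eq0 !expf_eq0 (negPf a0) !andbF !orbF.
  by case/orP: smax => /eqP /size_eq_coef ->; rewrite ?orbT.
rewrite !homF_ev // !mulf_eq0 !expf_eq0 (negPf b0) !andbF /=.
case: (boolP (g.[G`_M / H`_M] == 0)) => //= r0.
by apply: (coprimep_root cgh).
Qed.

Lemma coprime_hom_H m p G H : size p = m.+1 -> coprimep G H ->
  coprimep H (hom m p G H).
Proof.
move=> sp cGH; rewrite /hom big_ord_recr /= subnn expr0 mulr1.
have -> : \sum_(i < m) p`_i *: (G ^+ i * H ^+ (m - i)) =
   (\sum_(i < m) p`_i *: (G ^+ i * H ^+ (m - i.+1))) * H.
  rewrite mulr_suml; apply: eq_bigr => i _.
  rewrite -scalerAl -mulrA -exprSr subnSK //.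
rewrite coprimep_addl_mul coprimepZr ?size_eq_coef //.
by apply: coprimep_expr; rewrite coprimep_sym.
Qed.

Lemma hom_comb m L (u v g h G H : {poly F}) :
  H != 0 -> (size u <= L.+1)%N -> (size v <= L.+1)%N ->
  (size g <= m.+1)%N -> (size h <= m.+1)%N ->
  hom (L + m) (u * g + v * h) G H =
  hom L u G H * hom m g G H + hom L v G H * hom m h G H.
Proof.
move=> H0 su sv sg sh; apply/eqP; rewrite -tofrac_eq; apply/eqP.
have y0 : tofrac H != 0 by rewrite tofrac_eq0.
rewrite tofracD !tofracM !tofrac_hom !homG_ev //; last first.
  apply: leq_trans (size_polyD _ _) _; rewrite geq_max.
  apply/andP; split; apply: leq_trans (size_polyMleq _ _) _.
    move: su sg; lia.
  move: sv sh; lia.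
rewrite rmorphD !rmorphM hornerD !hornerM exprD; ring.
Qed.

Lemma coprime_hom g h m G H :
  coprimep g h -> (size g <= m.+1)%N -> (size h <= m.+1)%N ->
  (size g == m.+1) || (size h == m.+1) ->
  coprimep G H -> H != 0 -> coprimep (hom m g G H) (hom m h G H).
Proof.
move=> cgh sg sh smax cGH H0.
have [[u v] /= Huv] := Bezout_coprimepP _ _ cgh.
have /size_poly1P [c c0 ec] : size (u * g + v * h) == 1%N.
  by rewrite (eqp_size Huv) size_poly1.
set L := maxn (size u) (size v).
have su : (size u <= L.+1)%N by rewrite /L; lia.
have sv : (size v <= L.+1)%N by rewrite /L; lia.
have comb := hom_comb G H0 su sv sg sh; rewrite ec hom_C in comb.
apply/coprimepP => dd dN dD.
have dH : dd %| H ^+ (L + m).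
  rewrite -(dvdpZr _ _ c0) comb.
  by apply: dvdp_add; apply: dvdp_mull.
have cdH : coprimep dd H.
  case/orP: smax => /eqP sm.
    by rewrite coprimep_sym; apply: coprimep_dvdl dN (coprime_hom_H sm cGH).
  by rewrite coprimep_sym; apply: coprimep_dvdl dD (coprime_hom_H sm cGH).
have : coprimep dd dd by apply: coprimep_dvdl dH (coprimep_expr _ cdH).
by rewrite coprimepp size_poly_eq1.
Qed.

Lemma X0 : ('X - 0%:P : {poly F}) = 'X.
Proof. by rewrite subr0. Qed.

Lemma mup0_coef p : p != 0 ->
  (forall i, (i < mup 0 p)%N -> p`_i = 0) /\ p`_(mup 0 p) != 0.
Proof.
move=> p0; set s := mup 0 p.
have : ('X - 0%:P) ^+ s %| p by rewrite -mup_geq.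
rewrite X0 => /dvdpP [q eq]; split.
  by move=> i lis; rewrite eq coefMXn lis.
rewrite eq coefMXn ltnn subnn; apply/negP => /eqP q0.
have : ('X - 0%:P) ^+ s.+1 %| p.
  rewrite X0 eq exprS dvdp_mul2r ?expf_neq0 ?polyX_eq0 //.
  by rewrite -X0 dvdp_XsubCl /root horner_coef0 q0.
by rewrite -mup_geq // ltnn.
Qed.

Lemma mup_gt0 p : p != 0 -> (0 < mup 0 p)%N = root p 0.
Proof. by move=> p0; rewrite -XsubC_dvd // dvdp_XsubCl. Qed.

Lemma mup_le_deg p : p != 0 -> (mup 0 p <= pdeg p)%N.
Proof.
move=> p0; have : ('X - 0%:P) ^+ (mup 0 p) %| p by rewrite -mup_geq.
move/(dvdp_leq p0); rewrite size_exp_XsubC /pdeg.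
by move=> h; rewrite -ltnS (ltn_predK h).
Qed.

Lemma mupZ c p : c != 0 -> mup 0 (c *: p) = mup 0 p.
Proof. by move=> c0; rewrite -mul_polyC mupMr // rootC. Qed.

Lemma pdegZ c p : c != 0 -> pdeg (c *: p) = pdeg p.
Proof. by move=> c0; rewrite /pdeg size_scale. Qed.

Lemma mupX p n : p != 0 -> mup 0 (p ^+ n) = (mup 0 p * n)%N.
Proof.
move=> p0; elim: n => [|n IH]; first by rewrite expr0 muln0 mupNroot // root1.
by rewrite exprS mupM ?expf_neq0 // IH mulnS.
Qed.

Lemma pdegM p q : p != 0 -> q != 0 -> pdeg (p * q) = (pdeg p + pdeg q)%N.
Proof.
move=> p0 q0; rewrite /pdeg size_mul //.
move: p0 q0; rewrite -!size_poly_gt0; move: (size p) (size q) => a b; lia.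
Qed.

Lemma pdegX p n : pdeg (p ^+ n) = (pdeg p * n)%N.
Proof. exact: size_exp. Qed.

Lemma term_pdeg m (i : nat) c G H : c != 0 -> G != 0 -> H != 0 ->
  size (c *: (G ^+ i * H ^+ (m - i))) = (i * pdeg G + (m - i) * pdeg H).+1.
Proof.
move=> c0 G0 H0.
have t0 : G ^+ i * H ^+ (m - i) != 0 by rewrite mulf_neq0 ?expf_neq0.
have sz : (0 < size (G ^+ i * H ^+ (m - i))%R)%N by rewrite size_poly_gt0.
rewrite size_scale // -(prednK sz).
by rewrite -/(pdeg _) pdegM ?expf_neq0 // !pdegX mulnC [((m - i) * _)%N]mulnC.
Qed.

Lemma term_mup m (i : nat) c G H : c != 0 -> G != 0 -> H != 0 ->
  mup 0 (c *: (G ^+ i * H ^+ (m - i))) = (i * mup 0 G + (m - i) * mup 0 H)%N.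
Proof.
move=> c0 G0 H0.
by rewrite mupZ // mupM ?expf_neq0 // !mupX // mulnC [((m - i) * _)%N]mulnC.
Qed.

Lemma size_dom n (T : 'I_n -> {poly F}) (a : 'I_n) :
  T a != 0 -> (forall i, i != a -> (size (T i) < size (T a))%N) ->
  size (\sum_i T i) = size (T a).
Proof.
move=> Ta0 hlt; rewrite (bigD1 a) //= size_addl //.
apply: (big_ind (fun q => size q < size (T a))%N) => //.
- by rewrite size_poly0 size_poly_gt0.
- move=> q1 q2 h1 h2; apply: leq_ltn_trans (size_polyD _ _) _; by rewrite gtn_max h1 h2.
Qed.

Lemma mup_dom n (T : 'I_n -> {poly F}) (a : 'I_n) :
  T a != 0 -> (forall i, i != a -> T i != 0 -> (mup 0 (T a) < mup 0 (T i))%N) ->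
  mup 0 (\sum_i T i) = mup 0 (T a).
Proof.
move=> Ta0 hlt; set s := mup 0 (T a).
have dR : ('X - 0%:P) ^+ s.+1 %| \sum_(i | i != a) T i.
  apply: (big_ind (fun q => ('X - 0%:P) ^+ s.+1 %| q)) => //.
    by move=> q1 q2; apply: dvdp_add.
  move=> i ia; have [->|Ti0] := eqVneq (T i) 0; first by rewrite dvdp0.
  by rewrite -mup_geq //; apply: hlt.
have nd : ~~ (('X - 0%:P) ^+ s.+1 %| T a) by rewrite -mup_ltn.
have eS : \sum_i T i = T a + \sum_(i | i != a) T i by rewrite (bigD1 a).
have S0 : \sum_i T i != 0.
  apply/eqP => S0; move: nd; rewrite (_ : T a = - \sum_(i | i != a) T i).
    by rewrite dvdpNr dR.
  by apply/eqP; rewrite -addr_eq0 -eS S0.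
rewrite eS in S0 *; apply/eqP; rewrite eqn_leq.
rewrite mup_leq // mup_geq // (dvdp_addl _ dR) nd /=.
apply: dvdp_add; first by rewrite -mup_geq.
by apply: dvdp_trans dR; rewrite dvdp_exp2l.
Qed.

Lemma hom_gt m p G H : p != 0 -> (size p <= m.+1)%N -> G != 0 -> H != 0 ->
  (pdeg H < pdeg G)%N ->
  pdeg (hom m p G H) = (pdeg p * pdeg G + (m - pdeg p) * pdeg H)%N.
Proof.
move=> p0 sp G0 H0 lt.
have la : (pdeg p < m.+1)%N by move: sp; rewrite /pdeg; lia.
have pa : p`_(pdeg p) != 0 by rewrite -lead_coefE lead_coef_eq0.
rewrite /pdeg /hom (size_dom (a := Ordinal la)) /= ?term_pdeg //.
  by rewrite -size_poly_eq0 term_pdeg.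
move=> i ia; have [->|pi0] := eqVneq p`_i 0.
  by rewrite scale0r size_poly0.
have ilt : (i < pdeg p)%N.
  rewrite ltn_neqAle; apply/andP; split.
    by apply/eqP => e; move/eqP: ia; apply; apply: val_inj.
  rewrite leqNgt; apply/negP => gi; move/eqP: pi0; apply.
  apply: nth_default; move: gi; rewrite /pdeg; move: (size p) (nat_of_ord i) => a b; lia.
rewrite (term_pdeg m i) // ltnS.
have := ltn_ord i.
move: lt ilt; move: (pdeg p) (pdeg G) (pdeg H) (nat_of_ord i) => A B C j; nia.
Qed.

Lemma hom_lt m p G H : p != 0 -> (size p <= m.+1)%N -> G != 0 -> H != 0 ->
  (pdeg G < pdeg H)%N ->
  pdeg (hom m p G H) = (mup 0 p * pdeg G + (m - mup 0 p) * pdeg H)%N.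
Proof.
move=> p0 sp G0 H0 lt.
have [lows pa] := mup0_coef p0.
have la : (mup 0 p < m.+1)%N.
  have := mup_le_deg p0; move: sp; rewrite /pdeg.
  move: (size p) (mup 0 p) => a b; lia.
rewrite /pdeg /hom (size_dom (a := Ordinal la)) /= ?term_pdeg //.
  by rewrite -size_poly_eq0 term_pdeg.
move=> i ia; have [->|pi0] := eqVneq p`_i 0.
  by rewrite scale0r size_poly0.
have ilt : (mup 0 p < i)%N.
  rewrite ltn_neqAle; apply/andP; split.
    by apply/eqP => e; move/eqP: ia; apply; apply: val_inj.
  rewrite leqNgt; apply/negP => gi; move/eqP: pi0; apply; exact: lows.
rewrite (term_pdeg m i) // ltnS.
have := ltn_ord i.
move: lt ilt; move: (mup 0 p) (pdeg G) (pdeg H) (nat_of_ord i) => A B C j; nia.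
Qed.

Lemma hom_mupG m p G H : p != 0 -> (size p <= m.+1)%N -> G != 0 -> H != 0 ->
  root G 0 -> ~~ root H 0 ->
  mup 0 (hom m p G H) = (mup 0 p * mup 0 G)%N.
Proof.
move=> p0 sp G0 H0 rG rH.
have [lows pa] := mup0_coef p0.
have la : (mup 0 p < m.+1)%N.
  have := mup_le_deg p0; move: sp; rewrite /pdeg.
  move: (size p) (mup 0 p) => a b; lia.
have mG : (0 < mup 0 G)%N by rewrite mup_gt0.
have mH : mup 0 H = 0%N by rewrite mupNroot.
rewrite /hom (mup_dom (a := Ordinal la)) /= ?term_mup ?mH ?muln0 ?addn0 //.
  by rewrite scaler_eq0 negb_or pa mulf_neq0 ?expf_neq0.
move=> i ia; have [->|pi0] := eqVneq p`_i 0; first by rewrite scale0r eqxx.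
move=> _.
have ilt : (mup 0 p < i)%N.
  rewrite ltn_neqAle; apply/andP; split.
    by apply/eqP => e; move/eqP: ia; apply; apply: val_inj.
  rewrite leqNgt; apply/negP => gi; move/eqP: pi0; apply; exact: lows.
rewrite (term_mup m i) // mH muln0 addn0.
by rewrite ltn_mul2r mG.
Qed.

Lemma hom_mupH m p G H : p != 0 -> (size p <= m.+1)%N -> G != 0 -> H != 0 ->
  root H 0 -> ~~ root G 0 ->
  mup 0 (hom m p G H) = ((m - pdeg p) * mup 0 H)%N.
Proof.
move=> p0 sp G0 H0 rH rG.
have la : (pdeg p < m.+1)%N by move: sp; rewrite /pdeg; move: (size p) => a; lia.
have pa : p`_(pdeg p) != 0 by rewrite -lead_coefE lead_coef_eq0.
have mH : (0 < mup 0 H)%N by rewrite mup_gt0.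
have mG : mup 0 G = 0%N by rewrite mupNroot.
rewrite /hom (mup_dom (a := Ordinal la)) /= ?term_mup ?mG ?muln0 ?add0n //.
  by rewrite scaler_eq0 negb_or pa mulf_neq0 ?expf_neq0.
move=> i ia; have [->|pi0] := eqVneq p`_i 0; first by rewrite scale0r eqxx.
move=> _.
have ilt : (i < pdeg p)%N.
  rewrite ltn_neqAle; apply/andP; split.
    by apply/eqP => e; move/eqP: ia; apply; apply: val_inj.
  rewrite leqNgt; apply/negP => gi; move/eqP: pi0; apply.
  apply: nth_default; move: gi; rewrite /pdeg; move: (size p) (nat_of_ord i) => a b; lia.
rewrite (term_mup m i) // mG muln0 add0n ltn_mul2r mH /=.
have := ltn_ord i; have la2 := la; move: ilt la2; move: (pdeg p) (nat_of_ord i) => a b; lia.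
Qed.

Lemma ratA m g h G H : H != 0 -> (size g <= m.+1)%N -> (size h <= m.+1)%N ->
  rat_comp g h (tofrac G / tofrac H) =
  tofrac (hom m g G H) / tofrac (hom m h G H).
Proof.
move=> H0 sg sh.
have e : forall p r, (map_poly (fun c : F => tofrac c%:P) p).[r] = ev r p by [].
have y0 : tofrac H != 0 by rewrite tofrac_eq0.
rewrite /rat_comp !e !tofrac_hom (homG_ev _ _ y0 sg) (homG_ev _ _ y0 sh).
have ym : tofrac H ^+ m != 0 by rewrite expf_neq0.
rewrite -[(map_poly cK g).[_]]/(ev _ g) -[(map_poly cK h).[_]]/(ev _ h).
move: ym; move: (tofrac H ^+ m) (ev _ g) (ev _ h) => z a b z0.
by rewrite invfM mulrACA divff // mul1r.
Qed.

Lemma unique_rep g h N D : coprimep g h -> coprimep N D -> h != 0 -> D != 0 ->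
  tofrac g / tofrac h = tofrac N / tofrac D ->
  exists2 c, c != 0 & g = c *: N /\ h = c *: D.
Proof.
move=> cgh cND h0 D0 /eqP; rewrite eqr_div ?tofrac_eq0 // -!tofracM tofrac_eq.
move=> /eqP E.
have hD : h %| D.
  have : h %| D * g by rewrite mulrC E dvdp_mull.
  by rewrite Gauss_dvdpl // coprimep_sym.
have Dh : D %| h.
  have : D %| h * N by rewrite mulrC -E dvdp_mull.
  by rewrite Gauss_dvdpl // coprimep_sym.
have /eqpP [[c1 c2] /= /andP [c10 c20] ec] : h %= D by rewrite /eqp hD Dh.
have eh : h = (c2 / c1) *: D.
  by rewrite mulrC -scalerA -ec scalerA mulVf ?scale1r.
exists (c2 / c1); first by rewrite mulf_neq0 ?invr_eq0.
split => //; apply: (mulIf D0); rewrite E eh -!scalerAl -scalerAr mulrC.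
done.
Qed.

Lemma hom_assoc d m p A B G H : H != 0 -> (size p <= d.+1)%N ->
  (size A <= m.+1)%N -> (size B <= m.+1)%N ->
  hom d p (hom m A G H) (hom m B G H) = hom (d * m) (hom d p A B) G H.
Proof.
move=> H0 sp sA sB; apply/eqP; rewrite -tofrac_eq; apply/eqP.
have y0 : tofrac H != 0 by rewrite tofrac_eq0.
have sh' : (size (hom d p A B) <= (d * m).+1)%N by exact: hom_size_le.
rewrite !tofrac_hom (homG_ev _ _ y0 sA) (homG_ev _ _ y0 sB) (homG_ev _ _ y0 sh').
rewrite -[(map_poly cK A).[_]]/(ev _ A) -[(map_poly cK B).[_]]/(ev _ B).
rewrite -[(map_poly cK (hom d p A B)).[_]]/(ev _ (hom d p A B)).
rewrite [_ ^+ m * ev _ A]mulrC [_ ^+ m * ev _ B]mulrC homG_scale -ev_hom.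
by rewrite -exprM mulnC.
Qed.

Lemma size_exact (p : {poly F}) k : (size p <= k.+1)%N -> p`_k != 0 -> size p = k.+1.
Proof.
move=> sp pk; apply/eqP; rewrite eqn_leq sp /=.
rewrite ltnNge; apply/negP => le; move/eqP: pk; apply; exact: nth_default.
Qed.

End Hom.


Section Main.
Variable F : fieldType.
Variables (g h : nat -> {poly F}) (d : nat).
Hypothesis Hlow : forall k, (0 < k)%N ->
     [/\ coprimep (g k) (h k), h k != 0 &
         rat_iter (g 1%N) (h 1%N) k = tofrac (g k) / tofrac (h k)].
Hypothesis Hd : d = maxn (pdeg (g 1%N)) (pdeg (h 1%N)).
Hypothesis Hd1 : (1 <= d)%N.

Definition SZ n := [&& (size (g n) <= (d ^ n).+1)%N, (size (h n) <= (d ^ n).+1)%N &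
   (size (g n) == (d ^ n).+1) || (size (h n) == (d ^ n).+1)].

Lemma SZ1 : SZ 1.
Proof.
rewrite /SZ expn1; move: Hd Hd1; rewrite /pdeg.
move: (size (g 1%N)) (size (h 1%N)) => a b -> le.
apply/and3P; split; lia.
Qed.

Lemma step n : (0 < n)%N -> SZ n -> SZ n.+1 /\
  exists2 c, c != 0 & g n.+1 = c *: hom d (g 1%N) (g n) (h n) /\
                      h n.+1 = c *: hom d (h 1%N) (g n) (h n).
Proof.
move=> n0 /and3P [sg sh smax].
have [cn hn0 rn] := Hlow n0.
have [c1 h10 r1] := Hlow (ltn0Sn 0).
have [cS hS0 rS] := Hlow (ltn0Sn n).
have /and3P [sg1 sh1 smax1] := SZ1; rewrite expn1 in sg1 sh1 smax1.
have E : tofrac (g n.+1) / tofrac (h n.+1) =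
         tofrac (hom d (g 1%N) (g n) (h n)) / tofrac (hom d (h 1%N) (g n) (h n)).
  by rewrite -rS /rat_iter iterS -/(rat_iter _ _ n) rn (ratA _ hn0 sg1 sh1).
have cND := coprime_hom c1 sg1 sh1 smax1 cn hn0.
have top : ((g n)`_(d ^ n) != 0) || ((h n)`_(d ^ n) != 0).
  by case/orP: smax => /eqP /size_eq_coef ->; rewrite ?orbT.
have DT := Deg_top c1 sg1 sh1 smax1 sg sh top.
have sN := hom_size_le d (g 1%N) sg sh.
have sD := hom_size_le d (h 1%N) sg sh.
have dpos : (0 < d * d ^ n)%N by rewrite muln_gt0 expn_gt0 Hd1.
have D0 : hom d (h 1%N) (g n) (h n) != 0.
  apply/eqP => D0; move: cND DT; rewrite D0 coprimep0 coef0 eqxx orbF => /eqp_size.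
  rewrite size_poly1 => sz1 nz.
  have := size_exact sN nz; rewrite sz1; move: dpos; move: (d * d ^ n)%N => k; lia.
have [c c0 [eg eh]] := unique_rep cS cND hS0 D0 E.
split; last by exists c.
rewrite /SZ expnS eg eh !size_scale // sN sD /=.
by case/orP: DT => /(size_exact _) -> //; rewrite eqxx ?orbT.
Qed.

Lemma SZall n : (0 < n)%N -> SZ n.
Proof.
elim: n => [//|[|n] IH _]; first exact: SZ1.
by case: (step (ltn0Sn n) (IH (ltn0Sn n))).
Qed.

Lemma stepc n : (0 < n)%N ->
  exists2 c, c != 0 & g n.+1 = c *: hom d (g 1%N) (g n) (h n) /\
                      h n.+1 = c *: hom d (h 1%N) (g n) (h n).
Proof. by move=> n0; case: (step n0 (SZall n0)). Qed.

Lemma compose j k : (0 < j)%N -> (0 < k)%N ->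
  exists2 c, c != 0 & g (j + k)%N = c *: hom (d ^ j) (g j) (g k) (h k) /\
                      h (j + k)%N = c *: hom (d ^ j) (h j) (g k) (h k).
Proof.
move=> + k0; elim: j => [//|[|j] IH _].
  by rewrite add1n expn1; apply: stepc.
have j0 : (0 < j.+1)%N by [].
have [c2 c20 [eg2 eh2]] := IH j0.
have [c1 c10 [eg1 eh1]] := stepc (ltn_addr k j0).
have [c3 c30 [eg3 eh3]] := stepc j0.
have [_ hk0 _] := Hlow k0.
have /and3P [sg1 sh1 _] := SZ1; rewrite expn1 in sg1 sh1.
have /and3P [sgj shj _] := SZall j0.
exists (c1 * c2 ^+ d / c3).
  by rewrite mulf_neq0 ?invr_eq0 // mulf_neq0 // expf_neq0.
rewrite addSn eg1 eh1 eg2 eh2 !hom_scale !hom_assoc //.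
have -> : hom d (g 1%N) (g j.+1) (h j.+1) = c3^-1 *: g j.+2.
  by rewrite eg3 scalerA mulVf ?scale1r.
have -> : hom d (h 1%N) (g j.+1) (h j.+1) = c3^-1 *: h j.+2.
  by rewrite eh3 scalerA mulVf ?scale1r.
by rewrite !homZ !scalerA -expnS.
Qed.

Lemma hnz n : (0 < n)%N -> h n != 0.
Proof. by move=> n0; case: (Hlow n0). Qed.

Lemma gnz n : (0 < n)%N -> g n != 0.
Proof.
move=> n0; apply/eqP => g0; have [c _ _] := Hlow n0.
have /and3P [_ _ sm] := SZall n0; move: c sm; rewrite g0 coprime0p => /eqp_size.
rewrite size_poly1 size_poly0 => ->; rewrite eqSS /= => /eqP e.
by move: (expn_gt0 d n); rewrite Hd1 -e.
Qed.

Lemma degs n : (0 < n)%N ->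
  [/\ (pdeg (g n) <= d ^ n)%N, (pdeg (h n) <= d ^ n)%N &
      (pdeg (g n) = d ^ n)%N \/ (pdeg (h n) = d ^ n)%N].
Proof.
move=> n0; have /and3P [] := SZall n0; rewrite /pdeg.
move: (size (g n)) (size (h n)) (d ^ n)%N => A B D sA sB /orP [] /eqP e.
  by split; [lia | lia | left; lia].
by split; [lia | lia | right; lia].
Qed.

Lemma eqdeg n : (0 < n)%N -> ~~ (pdeg (g n) < pdeg (h n))%N ->
  ~~ (pdeg (h n) < pdeg (g n))%N -> (pdeg (g n) = d ^ n)%N /\ (pdeg (h n) = d ^ n)%N.
Proof.
move=> n0; have [] := degs n0.
move: (pdeg (g n)) (pdeg (h n)) (d ^ n)%N => A B D; lia.
Qed.

Lemma deg_gt n : (0 < n)%N -> (pdeg (h n) < pdeg (g n))%N -> (pdeg (g n) = d ^ n)%N.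
Proof.
move=> n0; have [] := degs n0.
move: (pdeg (g n)) (pdeg (h n)) (d ^ n)%N => A B D; lia.
Qed.

Lemma deg_lt n : (0 < n)%N -> (pdeg (g n) < pdeg (h n))%N -> (pdeg (h n) = d ^ n)%N.
Proof.
move=> n0; have [] := degs n0.
move: (pdeg (g n)) (pdeg (h n)) (d ^ n)%N => A B D; lia.
Qed.

Lemma s_le n : (0 < n)%N -> (mup 0 (g n) <= d ^ n)%N.
Proof.
move=> n0; have [] := degs n0; have := mup_le_deg (gnz n0).
move: (mup 0 (g n)) (pdeg (g n)) (pdeg (h n)) (d ^ n)%N => A B C D; lia.
Qed.

Lemma t_le n : (0 < n)%N -> (mup 0 (h n) <= d ^ n)%N.
Proof.
move=> n0; have [] := degs n0; have := mup_le_deg (hnz n0).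
move: (mup 0 (h n)) (pdeg (g n)) (pdeg (h n)) (d ^ n)%N => A B C D; lia.
Qed.

Lemma s_pos n : (0 < n)%N -> (0 < mup 0 (g n))%N = root (g n) 0.
Proof. by move=> n0; rewrite mup_gt0 // gnz. Qed.

Lemma t_pos n : (0 < n)%N -> (0 < mup 0 (h n))%N = root (h n) 0.
Proof. by move=> n0; rewrite mup_gt0 // hnz. Qed.

Lemma s_zero n : (0 < n)%N -> ~~ root (g n) 0 -> mup 0 (g n) = 0%N.
Proof. by move=> n0; apply: mupNroot. Qed.

Lemma t_zero n : (0 < n)%N -> ~~ root (h n) 0 -> mup 0 (h n) = 0%N.
Proof. by move=> n0; apply: mupNroot. Qed.

Lemma notboth_g n : (0 < n)%N -> root (g n) 0 -> ~~ root (h n) 0.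
Proof. by move=> n0 r; have [c _ _] := Hlow n0; exact: (coprimep_root c r). Qed.

Lemma notboth_h n : (0 < n)%N -> root (h n) 0 -> ~~ root (g n) 0.
Proof.
move=> n0 r; have [c _ _] := Hlow n0; rewrite coprimep_sym in c.
exact: (coprimep_root c r).
Qed.

Lemma szj j : (0 < j)%N -> (size (g j) <= (d ^ j).+1)%N /\ (size (h j) <= (d ^ j).+1)%N.
Proof. by move=> j0; have /and3P [] := SZall j0. Qed.

Lemma RCgt j k : (0 < j)%N -> (0 < k)%N -> (pdeg (h k) < pdeg (g k))%N ->
  pdeg (g (j + k)%N) = (pdeg (g j) * pdeg (g k) + (d ^ j - pdeg (g j)) * pdeg (h k))%N /\
  pdeg (h (j + k)%N) = (pdeg (h j) * pdeg (g k) + (d ^ j - pdeg (h j)) * pdeg (h k))%N.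
Proof.
move=> j0 k0 lt; have [c c0 [eg eh]] := compose j0 k0.
have [sg sh] := szj j0.
by rewrite eg eh !pdegZ //; split; apply: hom_gt => //; rewrite ?gnz ?hnz.
Qed.

Lemma RClt j k : (0 < j)%N -> (0 < k)%N -> (pdeg (g k) < pdeg (h k))%N ->
  pdeg (g (j + k)%N) = (mup 0 (g j) * pdeg (g k) + (d ^ j - mup 0 (g j)) * pdeg (h k))%N /\
  pdeg (h (j + k)%N) = (mup 0 (h j) * pdeg (g k) + (d ^ j - mup 0 (h j)) * pdeg (h k))%N.
Proof.
move=> j0 k0 lt; have [c c0 [eg eh]] := compose j0 k0.
have [sg sh] := szj j0.
by rewrite eg eh !pdegZ //; split; apply: hom_lt => //; rewrite ?gnz ?hnz.
Qed.

Lemma RCrg j k : (0 < j)%N -> (0 < k)%N -> root (g k) 0 ->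
  mup 0 (g (j + k)%N) = (mup 0 (g j) * mup 0 (g k))%N /\
  mup 0 (h (j + k)%N) = (mup 0 (h j) * mup 0 (g k))%N.
Proof.
move=> j0 k0 r; have [c c0 [eg eh]] := compose j0 k0.
have [sg sh] := szj j0.
by rewrite eg eh !mupZ //; split; apply: hom_mupG => //;
  rewrite ?gnz ?hnz ?notboth_g.
Qed.

Lemma RCrh j k : (0 < j)%N -> (0 < k)%N -> root (h k) 0 ->
  mup 0 (g (j + k)%N) = ((d ^ j - pdeg (g j)) * mup 0 (h k))%N /\
  mup 0 (h (j + k)%N) = ((d ^ j - pdeg (h j)) * mup 0 (h k))%N.
Proof.
move=> j0 k0 r; have [c c0 [eg eh]] := compose j0 k0.
have [sg sh] := szj j0.
by rewrite eg eh !mupZ //; split; apply: hom_mupH => //;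
  rewrite ?gnz ?hnz ?notboth_h.
Qed.

Lemma Pow e0 : (0 < e0)%N -> root (g e0) 0 -> forall i, (0 < i)%N ->
  mup 0 (g (i * e0)%N) = (mup 0 (g e0) ^ i)%N /\ mup 0 (h (i * e0)%N) = 0%N.
Proof.
move=> e00 r; have S0 : (0 < mup 0 (g e0))%N by rewrite s_pos.
have T0 : mup 0 (h e0) = 0%N by rewrite t_zero // notboth_g.
elim => [//|[|i] IH _]; first by rewrite !mul1n expn1.
have i0 : (0 < i.+1 * e0)%N by rewrite muln_gt0.
have [IHs IHt] := IH (ltn0Sn i).
have ri : root (g (i.+1 * e0)%N) 0 by rewrite -s_pos // IHs expn_gt0 S0.
have [A B] := RCrg e00 i0 ri.
rewrite mulSn A B IHs T0 mul0n; split => //; by rewrite -expnS.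
Qed.

Lemma Per e0 : (0 < e0)%N -> root (g e0) 0 ->
  (forall r, (0 < r)%N -> (r < e0)%N -> mup 0 (g r) = 0%N /\ mup 0 (h r) = 0%N) ->
  forall k, (0 < k)%N -> ~~ (e0 %| k)%N -> mup 0 (g k) = 0%N /\ mup 0 (h k) = 0%N.
Proof.
move=> e00 r small k k0 nd.
have rk : (0 < k %% e0)%N by rewrite lt0n; apply: contra nd => /eqP; rewrite /dvdn => ->.
have ltk : (k %% e0 < e0)%N by rewrite ltn_mod.
have [sr tr] := small _ rk ltk.
have [q0|qp] := posnP (k %/ e0).
  by rewrite (divn_eq k e0) q0 mul0n add0n; apply: small.
have [Ps _] := Pow e00 r qp.
have rq : root (g (k %/ e0 * e0)%N) 0.
  by rewrite -s_pos ?muln_gt0 ?qp // Ps expn_gt0 s_pos // r.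
have qe0 : (0 < k %/ e0 * e0)%N by rewrite muln_gt0 qp.
have [A B] := RCrg rk qe0 rq.
by rewrite (divn_eq k e0) addnC A B sr tr.
Qed.

Lemma part_i (mu : option nat) n
 (Hmu : is_first (fun k => (pdeg (g k) < pdeg (h k))%N) mu)
 (Hnu : is_first (fun k => (pdeg (h k) < pdeg (g k))%N) (Some n))
 (lt : olt (Some n) mu) :
 let delta := absdiff (pdeg (g n)) (pdeg (h n)) in
 (forall i, (0 < i)%N -> pdeg (g (i * n)%N) = (d ^ (i * n))%N /\
        (pdeg (h (i * n)%N) + delta ^ i = d ^ (i * n))%N) /\
 (forall k, (0 < k)%N -> ~~ (n %| k)%N ->
        pdeg (g k) = (d ^ k)%N /\ pdeg (h k) = (d ^ k)%N).
Proof.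
move=> delta; case: Hnu => n0 [Pn minn].
have small : forall k, (0 < k)%N -> (k < n)%N ->
    (pdeg (g k) = d ^ k)%N /\ (pdeg (h k) = d ^ k)%N.
  move=> k k0 kn; apply: eqdeg => //; last exact: minn.
  move: Hmu lt; case: mu => [m|] /=; last by move=> H _; apply: H.
  move=> [_ [_ minm]] nm; apply: minm => //; exact: ltn_trans kn nm.
have an := deg_gt n0 Pn.
have dlt : (pdeg (h n) + delta = d ^ n)%N /\ (0 < delta)%N.
  rewrite /delta /absdiff; move: Pn an.
  move: (pdeg (g n)) (pdeg (h n)) (d ^ n)%N => A B D; lia.
have A : forall i, (0 < i)%N -> pdeg (g (i * n)%N) = (d ^ (i * n))%N /\
        (pdeg (h (i * n)%N) + delta ^ i = d ^ (i * n))%N.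
  elim => [//|[|i] IH _].
    rewrite mul1n expn1; split => //; by case: dlt.
  have [IHa IHb] := IH (ltn0Sn i).
  have k0 : (0 < i.+1 * n)%N by rewrite muln_gt0.
  have lt' : (pdeg (h (i.+1 * n)%N) < pdeg (g (i.+1 * n)%N))%N.
    rewrite IHa -IHb; case: dlt => _ dp.
    have : (0 < delta ^ i.+1)%N by rewrite expn_gt0 dp.
    move: (pdeg (h (i.+1 * n)%N)) (delta ^ i.+1)%N => B P; lia.
  have [Ea Eb] := RCgt n0 k0 lt'.
  rewrite mulSn Ea Eb IHa an subnn mul0n addn0 expnD; split => //.
  rewrite expnS; case: dlt => e1 _; move: IHb e1; clear IH.
  move: (pdeg (h n)) (pdeg (h (i.+1 * n)%N)) (d ^ n)%N (d ^ (i.+1 * n))%N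
        (delta ^ i.+1)%N => B C E D P; nia.
split => // k k0 nd.
have ek := divn_eq k n.
have rn : (k %% n < n)%N by rewrite ltn_pmod.
have r0 : (0 < k %% n)%N by rewrite lt0n; apply: contra nd => /eqP; rewrite /dvdn => ->.
move: (k %/ n)%N (k %% n)%N ek rn r0 => q r ek rn r0.
have [q0|qp] := posnP q.
  by move: ek; rewrite q0 mul0n add0n => ->; apply: small.
have kq0 : (0 < q * n)%N by rewrite muln_gt0 qp.
have [Aa Ab] := A q qp.
have lt' : (pdeg (h (q * n)%N) < pdeg (g (q * n)%N))%N.
  rewrite Aa -Ab; case: dlt => _ dp.
  have : (0 < delta ^ q)%N by rewrite expn_gt0 dp.
  move: (pdeg (h (q * n)%N)) (delta ^ q)%N => B P; lia.
have [Ea Eb] := RCgt r0 kq0 lt'.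
have [sa sb] := small r r0 rn.
rewrite ek addnC Ea Eb sa sb subnn !mul0n !addn0 expnD Aa; by split.
Qed.

Lemma notgt_below m (nu : option nat)
 (Hnu : is_first (fun k => (pdeg (h k) < pdeg (g k))%N) nu)
 (lt : olt (Some m) nu) :
 forall k, (0 < k)%N -> (k <= m)%N -> ~~ (pdeg (h k) < pdeg (g k))%N.
Proof.
move=> k k0 km; move: Hnu lt; case: nu => [v|] /=; last by move=> H _; apply: H.
by move=> [_ [_ minv]] mv; apply: minv => //; exact: leq_ltn_trans km mv.
Qed.

Lemma part_ii m (nu : option nat)
 (Hmu : is_first (fun k => (pdeg (g k) < pdeg (h k))%N) (Some m))
 (Hnu : is_first (fun k => (pdeg (h k) < pdeg (g k))%N) nu)
 (lt : olt (Some m) nu)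
 (He : is_first (fun k => root (g k) 0) None)
 (Heps : is_first (fun k => root (h k) 0) None) :
 forall k, (0 < k)%N -> k != m ->
        pdeg (g k) = (d ^ k)%N /\ pdeg (h k) = (d ^ k)%N.
Proof.
case: Hmu => m0 [Pm minm] k k0 km.
have ng := notgt_below Hnu lt.
have [lkm|gkm] := ltnP k m.
  by apply: eqdeg => //; [apply: minm | apply: ng => //; apply: ltnW].
have {}gkm : (m < k)%N by rewrite ltn_neqAle gkm eq_sym km.
have j0 : (0 < k - m)%N by rewrite subn_gt0.
have ek : k = (k - m + m)%N by rewrite subnK // ltnW.
have [Ea Eb] := RClt j0 m0 Pm.
rewrite ek Ea Eb s_zero ?t_zero //; [|exact: Heps | exact: He].
by rewrite (deg_lt m0 Pm) !mul0n !add0n !subn0 expnD.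
Qed.

Lemma below_first (P : nat -> bool) (o : option nat) x :
  is_first P o -> olt (Some x) o -> forall r, (0 < r)%N -> (r <= x)%N -> ~~ P r.
Proof.
case: o => [v|] /=; last by move=> H _ r r0 _; apply: H.
by move=> [_ [_ minv]] xv r r0 rx; apply: minv => //; exact: leq_ltn_trans rx xv.
Qed.

Lemma part_iii m ee (nu eps : option nat)
 (Hmu : is_first (fun k => (pdeg (g k) < pdeg (h k))%N) (Some m))
 (Hnu : is_first (fun k => (pdeg (h k) < pdeg (g k))%N) nu)
 (lt : olt (Some m) nu)
 (He : is_first (fun k => root (g k) 0) (Some ee))
 (Heps : is_first (fun k => root (h k) 0) eps)
 (lte : olt (Some ee) eps) :
 let delta := absdiff (pdeg (g m)) (pdeg (h m)) in
 let S := mup 0 (g ee) in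
 (forall i,
    (pdeg (g (i * ee + m)%N) + delta * S ^ i = d ^ (i * ee + m))%N /\
    pdeg (h (i * ee + m)%N) = (d ^ (i * ee + m))%N) /\
 (forall k, (0 < k)%N -> (forall i, k != (i * ee + m)%N) ->
    pdeg (g k) = (d ^ k)%N /\ pdeg (h k) = (d ^ k)%N).
Proof.
move=> delta S; have He' := He; case: He' => e0 [Re mine].
have Hmu' := Hmu; case: Hmu' => m0 [Pm minm].
have bm := deg_lt m0 Pm.
have dl : (pdeg (g m) + delta = d ^ m)%N.
  rewrite /delta /absdiff; move: Pm bm.
  move: (pdeg (g m)) (pdeg (h m)) (d ^ m)%N => A B D; lia.
have nh := below_first Heps lte.
have small : forall r, (0 < r)%N -> (r < ee)%N ->
    mup 0 (g r) = 0%N /\ mup 0 (h r) = 0%N.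
  move=> r r0 re; rewrite s_zero ?t_zero //; last exact: mine.
  by apply: nh => //; apply: ltnW.
have Pw := Pow e0 Re; have Q := Per e0 Re small.
split.
  case => [|i].
    by rewrite mul0n add0n expn0 muln1 dl bm.
  have j0 : (0 < i.+1 * ee)%N by rewrite muln_gt0 e0.
  have [Ps Pt] := Pw i.+1 (ltn0Sn i).
  have [Ea Eb] := RClt j0 m0 Pm.
  have sl := s_le j0; rewrite Ps in sl.
  rewrite Ea Eb Ps Pt bm expnD mul0n subn0 add0n; split => //.
  move: sl dl; rewrite -/S.
  move: (S ^ i.+1)%N (d ^ (i.+1 * ee))%N (d ^ m)%N (pdeg (g m)) => X Y Z A; nia.
move=> k k0 hk.
have ng := notgt_below Hnu lt.
have [lkm|gkm] := ltnP k m.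
  by apply: eqdeg => //; [apply: minm | apply: ng => //; apply: ltnW].
have {}gkm : (m < k)%N.
  rewrite ltn_neqAle gkm andbT; apply/eqP => e; move: (hk 0%N).
  by rewrite mul0n add0n e eqxx.
have j0 : (0 < k - m)%N by rewrite subn_gt0.
have ek : k = (k - m + m)%N by rewrite subnK // ltnW.
have nd : ~~ (ee %| k - m)%N.
  apply/negP => /dvdnP [q eq]; move: (hk q); rewrite -eq -ek eqxx //.
have [sj tj] := Q _ j0 nd.
have [Ea Eb] := RClt j0 m0 Pm.
by rewrite ek Ea Eb sj tj bm !mul0n !add0n !subn0 expnD.
Qed.

Lemma part_iv m ep (e nu : option nat)
 (Hmu : is_first (fun k => (pdeg (g k) < pdeg (h k))%N) (Some m))
 (Hnu : is_first (fun k => (pdeg (h k) < pdeg (g k))%N) nu)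
 (lt : olt (Some m) nu)
 (He : is_first (fun k => root (g k) 0) e)
 (Heps : is_first (fun k => root (h k) 0) (Some ep)) :
     e = Some (ep + m)%N /\
     let ee := (ep + m)%N in
     let delta := absdiff (pdeg (g m)) (pdeg (h m)) in
     let T := mup 0 (h ep) in
     (forall k, (0 < k)%N ->
        (pdeg (g (m + k)%N) + delta * mup 0 (g k) = d ^ (m + k))%N /\
        (pdeg (h (m + k)%N) + delta * mup 0 (h k) = d ^ (m + k))%N) /\
     (forall i, (0 < i)%N ->
        mup 0 (g (i * ee)%N) = (delta ^ i * T ^ i)%N /\ mup 0 (h (i * ee)%N) = 0%N) /\
     (forall i,
        mup 0 (h (i * ee + ep)%N) = (delta ^ i * T ^ i.+1)%N /\
        mup 0 (g (i * ee + ep)%N) = 0%N) /\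
     (forall k, (0 < k)%N -> (forall i, (0 < i)%N -> k != (i * ee)%N) ->
        (forall i, k != (i * ee + ep)%N) ->
        mup 0 (g k) = 0%N /\ mup 0 (h k) = 0%N).
Proof.
have Heps' := Heps; case: Heps' => ep0 [Rt minep].
have Hmu' := Hmu; case: Hmu' => m0 [Pm minm].
have T0 : (0 < mup 0 (h ep))%N by rewrite t_pos.
have sep : mup 0 (g ep) = 0%N by rewrite s_zero // notboth_h.
have bm := deg_lt m0 Pm.
set delta := absdiff (pdeg (g m)) (pdeg (h m)).
have dl : (pdeg (g m) + delta = d ^ m)%N /\ (0 < delta)%N.
  rewrite /delta /absdiff; move: Pm bm.
  move: (pdeg (g m)) (pdeg (h m)) (d ^ m)%N => A B D; lia.
have ng := notgt_below Hnu lt.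
have below : forall j, (0 < j)%N -> (j < m)%N ->
    (pdeg (g j) = d ^ j)%N /\ (pdeg (h j) = d ^ j)%N.
  by move=> j j0 jm; apply: eqdeg => //; [apply: minm | apply: ng => //; apply: ltnW].
have tr : forall r, (0 < r)%N -> (r < ep)%N -> mup 0 (h r) = 0%N.
  by move=> r r0 rep; rewrite t_zero // minep.
have L0 : forall r, (0 < r)%N -> (r < ep)%N -> mup 0 (g r) = 0%N.
  move=> r r0 rep; apply: s_zero => //.
  move: He; case: e => [e0|] /=; last by move=> H; apply: H.
  move=> [e00 [Re0 mine0]].
  have [re0|e0r] := ltnP r e0; first exact: mine0.
  have e0ep : (e0 < ep)%N by exact: leq_ltn_trans e0r rep.
  have small : forall r', (0 < r')%N -> (r' < e0)%N ->
      mup 0 (g r') = 0%N /\ mup 0 (h r') = 0%N.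
    move=> r' r'0 r'e; rewrite s_zero ?mine0 //; split => //.
    by apply: tr => //; apply: ltn_trans r'e e0ep.
  exfalso; have [dv|nd] := boolP (e0 %| ep)%N.
    move/dvdnP: dv => [q eq].
    have qp : (0 < q)%N by move: ep0; rewrite eq muln_gt0 => /andP [].
    have [_ Pt] := Pow e00 Re0 qp.
    by move: T0; rewrite eq Pt.
  have [_ Pt] := Per e00 Re0 small ep0 nd.
  by move: T0; rewrite Pt.
have ee0 : (0 < ep + m)%N by rewrite addn_gt0 ep0.
have dp : (0 < delta)%N by case: dl.
have [sE tE] : mup 0 (g (ep + m)%N) = (delta * mup 0 (h ep))%N /\
               mup 0 (h (ep + m)%N) = 0%N.
  have [A B] := RCrh m0 ep0 Rt.
  rewrite addnC A B bm subnn mul0n; split => //.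
  case: dl => dl _; congr (_ * _)%N; move: dl.
  move: (pdeg (g m)) (d ^ m)%N => A' D; lia.
have Ree : root (g (ep + m)%N) 0.
  by rewrite -s_pos // sE muln_gt0 T0 dp.
have notroot : forall k, (0 < k)%N -> (k < ep + m)%N -> ~~ root (g k) 0.
  move=> k k0 km; rewrite -s_pos // -leqNgt leqn0.
  have [kep|kep] := ltnP k ep; first by rewrite L0.
  have [ekep|nkep] := eqVneq k ep; first by rewrite ekep sep.
  have gk : (ep < k)%N by rewrite ltn_neqAle kep andbT eq_sym.
  have j0 : (0 < k - ep)%N by rewrite subn_gt0.
  have jm : (k - ep < m)%N by move: km gk; lia.
  have ek : k = (k - ep + ep)%N by rewrite subnK.
  have [A _] := RCrh j0 ep0 Rt.
  by rewrite ek A (proj1 (below _ j0 jm)) subnn mul0n.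
split.
  move: He; case: e => [e0|] /=; last by move=> H; move: (H _ ee0); rewrite Ree.
  move=> [e00 [Re0 mine0]]; congr Some; apply/eqP; rewrite eqn_leq.
  apply/andP; split.
    by rewrite leqNgt; apply/negP => lt'; move: (mine0 _ ee0 lt'); rewrite Ree.
  by rewrite leqNgt; apply/negP => lt'; move: (notroot _ e00 lt'); rewrite Re0.
move=> ee dd T; rewrite {}/dd.
have Lr : forall r, (0 < r)%N -> (r < ee)%N -> r != ep ->
    mup 0 (g r) = 0%N /\ mup 0 (h r) = 0%N.
  move=> r r0 rE rnep.
  have [rep|rep] := ltnP r ep; first by rewrite L0 ?tr.
  have gk : (ep < r)%N by rewrite ltn_neqAle rep andbT eq_sym.
  have j0 : (0 < r - ep)%N by rewrite subn_gt0.
  have jm : (r - ep < m)%N by move: rE gk; rewrite /ee; lia.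
  have er : r = (r - ep + ep)%N by rewrite subnK // ltnW.
  have [A B] := RCrh j0 ep0 Rt.
  have [bj cj] := below _ j0 jm.
  by rewrite er A B bj cj subnn !mul0n.
split.
  move=> k k0; have [Ea Eb] := RClt k0 m0 Pm.
  have sl := s_le k0; have tl := t_le k0.
  rewrite (addnC m k) Ea Eb bm; case: dl => dl _; rewrite expnD.
  move: sl tl dl; move: (mup 0 (g k)) (mup 0 (h k)) (d ^ k)%N (d ^ m)%N (pdeg (g m)) => X Y Z W A.
  split; nia.
have Pw := Pow ee0 Ree.
split.
  move=> i ip; have [Ps Pt] := Pw i ip.
  by rewrite Ps Pt sE expnMn.
split.
  case => [|i].
    by rewrite mul0n add0n expn0 mul1n expn1 sep.
  have j0 : (0 < i.+1 * ee)%N by rewrite muln_gt0 ee0.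
  have [Ps Pt] := Pw i.+1 (ltn0Sn i).
  have rj : root (g (i.+1 * ee)%N) 0.
    by rewrite -s_pos // Ps expn_gt0 sE muln_gt0 T0 dp.
  have [A B] := RCrg ep0 j0 rj.
  rewrite addnC A B Ps sE sep mul0n; split => //.
  by rewrite expnMn [(T ^ i.+2)%N]expnS /T mulnCA.
move=> k k0 hk1 hk2.
have ek := divn_eq k ee.
have rn : (k %% ee < ee)%N by rewrite ltn_pmod.
move: (k %/ ee)%N (k %% ee)%N ek rn => q r ek rn.
have [r0|rp] := posnP r.
  exfalso; have qp : (0 < q)%N.
    by move: k0; rewrite ek r0 addn0 muln_gt0 => /andP [].
  by move: (hk1 q qp); rewrite ek r0 addn0 eqxx.
have rnep : r != ep by apply/eqP => re; move: (hk2 q); rewrite ek re eqxx.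
have [sr tr'] := Lr r rp rn rnep.
have [q0|qp] := posnP q; first by rewrite ek q0 mul0n add0n sr tr'.
have j0 : (0 < q * ee)%N by rewrite muln_gt0 qp ee0.
have [Ps _] := Pw q qp.
have rj : root (g (q * ee)%N) 0.
  by rewrite -s_pos // Ps expn_gt0 sE muln_gt0 T0 dp.
have [A B] := RCrg rp j0 rj.
by rewrite ek addnC A B sr tr' !mul0n.
Qed.

End Main.

Unset Implicit Arguments.
Set Strict Implicit.

Theorem lemma7 (F : fieldType) (g h : nat -> {poly F}) (d : nat)
  (e eps mu nu : option nat)
  (Hlow : forall k, (0 < k)%N ->
     [/\ coprimep (g k) (h k), h k != 0 &
         rat_iter (g 1%N) (h 1%N) k = tofrac (g k) / tofrac (h k)])
  (Hd : d = maxn (pdeg (g 1%N)) (pdeg (h 1%N)))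
  (Hd1 : (1 <= d)%N)
  (He : is_first (fun k => root (g k) 0) e)
  (Heps : is_first (fun k => root (h k) 0) eps)
  (Hmu : is_first (fun k => (pdeg (g k) < pdeg (h k))%N) mu)
  (Hnu : is_first (fun k => (pdeg (h k) < pdeg (g k))%N) nu) :
  (* (i) *)
  (forall n, nu = Some n -> olt nu mu ->
     let delta := absdiff (pdeg (g n)) (pdeg (h n)) in
     (forall i, (0 < i)%N ->
        pdeg (g (i * n)%N) = (d ^ (i * n))%N /\
        (pdeg (h (i * n)%N) + delta ^ i = d ^ (i * n))%N) /\
     (forall k, (0 < k)%N -> ~~ (n %| k)%N ->
        pdeg (g k) = (d ^ k)%N /\ pdeg (h k) = (d ^ k)%N)) /\
  (* (ii) *)
  (forall m, mu = Some m -> olt mu nu -> eps = None -> e = None ->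
     forall k, (0 < k)%N -> k != m ->
        pdeg (g k) = (d ^ k)%N /\ pdeg (h k) = (d ^ k)%N) /\
  (* (iii) *)
  (forall m ee, mu = Some m -> olt mu nu -> e = Some ee -> olt e eps ->
     let delta := absdiff (pdeg (g m)) (pdeg (h m)) in
     let S := mup 0 (g ee) in
     (forall i,
        (pdeg (g (i * ee + m)%N) + delta * S ^ i = d ^ (i * ee + m))%N /\
        pdeg (h (i * ee + m)%N) = (d ^ (i * ee + m))%N) /\
     (forall k, (0 < k)%N -> (forall i, k != (i * ee + m)%N) ->
        pdeg (g k) = (d ^ k)%N /\ pdeg (h k) = (d ^ k)%N)) /\
  (* (iv) *)
  (forall m ep, mu = Some m -> olt mu nu -> eps = Some ep ->
     e = Some (ep + m)%N /\
     let ee := (ep + m)%N in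
     let delta := absdiff (pdeg (g m)) (pdeg (h m)) in
     let T := mup 0 (h ep) in
     (forall k, (0 < k)%N ->
        (pdeg (g (m + k)%N) + delta * mup 0 (g k) = d ^ (m + k))%N /\
        (pdeg (h (m + k)%N) + delta * mup 0 (h k) = d ^ (m + k))%N) /\
     (forall i, (0 < i)%N ->
        mup 0 (g (i * ee)%N) = (delta ^ i * T ^ i)%N /\ mup 0 (h (i * ee)%N) = 0%N) /\
     (forall i,
        mup 0 (h (i * ee + ep)%N) = (delta ^ i * T ^ i.+1)%N /\
        mup 0 (g (i * ee + ep)%N) = 0%N) /\
     (forall k, (0 < k)%N -> (forall i, (0 < i)%N -> k != (i * ee)%N) ->
        (forall i, k != (i * ee + ep)%N) ->
        mup 0 (g k) = 0%N /\ mup 0 (h k) = 0%N)).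
Proof.
split.
  move=> n en lt; subst nu.
  exact: (part_i Hlow Hd Hd1 Hmu Hnu lt).
split.
  move=> m em lt eN eeN; subst mu eps e.
  exact: (part_ii Hlow Hd Hd1 Hmu Hnu lt He Heps).
split.
  move=> m ee em lt eee lte; subst mu e.
  exact: (part_iii Hlow Hd Hd1 Hmu Hnu lt He Heps lte).
move=> m ep em lt eep; subst mu eps.
exact: (part_iv Hlow Hd Hd1 Hmu Hnu lt He Heps).
Qed.
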